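(* Let $B$ be a Banach space, $C\subset B$ a convex set, $f:B\to\mathbb{R}\cup\{+\infty\}$ a function, and $k$ a symmetric bilinear map, with pairing written $\langle\pi,k(\gamma)\rangle$, which is negative (not necessarily definite) on $\Delta C=\mathrm{Span}\{\pi-\gamma:\pi,\gamma\in C\}$, i.e. $\langle z,k(z)\rangle\leq0$ for all $z\in\Delta C$. Define $\mathcal{L}:C\to\mathbb{R}\cup\{+\infty\}$ by $\mathcal{L}(\pi)=\frac12\langle\pi,k(\pi)\rangle+2f(\pi)$ and $\mathcal{F}(\pi,\gamma)=\frac12\langle\pi,k(\gamma)\rangle+f(\pi)+f(\gamma)$ for $\pi,\gamma\in C$. Assume there exists $\pi_0\in C$ with $\mathcal{L}(\pi_0)<+\infty$. Then for every $(\pi_*,\gamma_* )\in\arg\min_{C\times C}\mathcal{F}$, one has $\mathcal{F}(\pi_*,\pi_* )=\mathcal{F}(\gamma_*,\gamma_* )=\mathcal{F}(\pi_*,\gamma_* )$. Moreover, if either $k$ is definite on $\Delta C$ (i.e. $\langle z,k(z)\rangle=0$, $z\in\Delta C$ implies $z=0$) or $f$ is strictly convex, then $\pi_*=\gamma_*$. *)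

(* Defs.v *)
From HB Require Import structures.
From mathcomp Require Import all_boot all_order all_algebra.
From mathcomp Require Import all_classical all_reals all_analysis.
Set Implicit Arguments. Unset Strict Implicit. Unset Printing Implicit Defensive.
Import Order.TTheory GRing.Theory Num.Theory.
Import numFieldNormedType.Exports.
Local Open Scope classical_set_scope.
Local Open Scope ring_scope.

Section Defs.
Variables (R : realType) (B : normedModType R).

Definition convex_subset (C : set B) : Prop :=
  forall x y (t : R), C x -> C y -> 0 <= t -> t <= 1 ->
    C (t *: x + (1 - t) *: y).

(* K : B -> B -> R is a symmetric bilinear map; K x y stands for <x, k(y)> *)
Definition symmetric_bilinear (K : B -> B -> R) : Prop :=
  (forall x y, K x y = K y x) /\
  (forall (a : R) x y z, K (a *: x + y) z = a * K x z + K y z).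

Definition DeltaC (C : set B) : set B :=
  [set z | exists (n : nat) (a : 'I_n -> R) (p g : 'I_n -> B),
      (forall i, C (p i) /\ C (g i)) /\
      z = \sum_(i < n) a i *: (p i - g i)].

Definition negative_on (K : B -> B -> R) (D : set B) : Prop :=
  forall z, D z -> K z z <= 0.

Definition definite_on (K : B -> B -> R) (D : set B) : Prop :=
  forall z, D z -> K z z = 0 -> z = 0.

Definition strictly_convex (f : B -> \bar R) : Prop :=
  forall x y (t : R), f x \is a fin_num -> f y \is a fin_num -> x != y ->
    0 < t -> t < 1 ->
    (f (t *: x + (1 - t) *: y)%R < t%:E * f x + (1 - t)%:E * f y)%E.

Definition L_obj (K : B -> B -> R) (f : B -> \bar R) (p : B) : \bar R :=
  ((2^-1 * K p p)%:E + 2%:E * f p)%E.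

Definition F_obj (K : B -> B -> R) (f : B -> \bar R) (p g : B) : \bar R :=
  ((2^-1 * K p g)%:E + f p + f g)%E.

Definition is_argmin2 (C : set B) (F : B -> B -> \bar R) (p g : B) : Prop :=
  C p /\ C g /\ (forall p' g', C p' -> C g' -> (F p g <= F p' g')%E).

End Defs.

(* Main.v *)
Require Import Defs.
From HB Require Import structures.
From mathcomp Require Import all_boot all_order all_algebra.
From mathcomp Require Import all_classical all_reals all_analysis.
From mathcomp Require Import lra.
Import Order.TTheory GRing.Theory Num.Theory.
Import numFieldNormedType.Exports.
Local Open Scope classical_set_scope.
Local Open Scope ring_scope.

Theorem theorem3 (R : realType) (B : completeNormedModType R)
  (C : set B) (f : B -> \bar R) (K : B -> B -> R) :
  convex_subset C ->
  (forall x, f x != -oo%E) ->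
  symmetric_bilinear K ->
  negative_on K (DeltaC C) ->
  (exists p0, C p0 /\ (L_obj K f p0 < +oo)%E) ->
  forall ps gs, is_argmin2 C (F_obj K f) ps gs ->
    (F_obj K f ps ps = F_obj K f gs gs /\ F_obj K f gs gs = F_obj K f ps gs) /\
    ((definite_on K (DeltaC C) \/ strictly_convex f) -> ps = gs).
Proof.
move=> convC fNinf [Ksym Klin] negK [p0 [Cp0 Lp0]] ps gs [Cps [Cgs Hmin]].
have KD x y z : K (x + y) z = K x z + K y z.
  by have := Klin 1 x y z; rewrite scale1r mul1r.
have K0 z : K 0 z = 0.
  by have := KD 0 0 z; rewrite addr0 => h; lra.
have KZ a x z : K (a *: x) z = a * K x z.
  by have := Klin a x 0 z; rewrite addr0 K0 addr0.
have KB x y z : K (x - y) z = K x z - K y z.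
  by rewrite KD -[- y]scaleN1r KZ mulN1r.
have KD' x y z : K z (x + y) = K z x + K z y.
  by rewrite Ksym KD (Ksym x) (Ksym y).
have KZ' a x z : K z (a *: x) = a * K z x.
  by rewrite Ksym KZ (Ksym x).
have KB' x y z : K z (x - y) = K z x - K z y.
  by rewrite Ksym KB (Ksym x) (Ksym y).
have [r0 Er0] : exists r, f p0 = r%:E.
  move: Lp0 (fNinf p0); rewrite /L_obj; case: (f p0) => [r| |] //=.
  - by move=> _ _; exists r.
  - by rewrite mulry gtr0_sg // mul1e.
have Hp0 := Hmin p0 p0 Cp0 Cp0.
have [a Ea] : exists r, f ps = r%:E.
  move: Hp0 (fNinf ps) (fNinf gs); rewrite /F_obj Er0; case: (f ps) => [r| |] //=.
  - by move=> _ _ _; exists r.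
  - by case: (f gs).
have [b Eb] : exists r, f gs = r%:E.
  move: Hp0 (fNinf gs); rewrite /F_obj Er0 Ea; case: (f gs) => [r| |] //=.
  by move=> _ _; exists r.
have Hd : DeltaC C (ps - gs).
  exists 1%N, (fun=> 1), (fun=> ps), (fun=> gs); split => //.
  by rewrite big_ord1 scale1r.
have Hneg := negK _ Hd.
rewrite KB !KB' (Ksym gs ps) in Hneg.
have H1 := Hmin ps ps Cps Cps.
have H2 := Hmin gs gs Cgs Cgs.
move: H1 H2; rewrite /F_obj Ea Eb -!EFinD !lee_fin => H1 H2.
split.
  by split; congr EFin; lra.
have Kz0 : K (ps - gs) (ps - gs) = 0.
  rewrite KB !KB' (Ksym gs ps); lra.
case=> [Hdef|Hsc].
  by apply/eqP; rewrite -subr_eq0; apply/eqP; apply: Hdef.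
case: (eqVneq ps gs) => // neq; exfalso.
have := Hsc ps gs (2^-1).
rewrite Ea Eb /= => /(_ isT isT neq).
set m := (2^-1 *: ps + (1 - 2^-1) *: gs).
have Cm : C m by apply: convC => //; lra.
have := Hmin m m Cm Cm.
have := fNinf m.
rewrite /F_obj Ea Eb; case: (f m) => [c| |] //= _; last first.
  move=> _ h; have h0 : (0:R) < 2^-1 by rewrite invr_gt0.
  have h1 : (2:R)^-1 < 1 by rewrite invf_lt1 // ltr1n.
  move: (h h0 h1).
  by rewrite -!EFinM -EFinD ltNge leey.
rewrite -?EFinD -?EFinM -?EFinD -?EFinM -?EFinD !lee_fin ?lte_fin.
rewrite /m !KD !KD' !KZ !KZ' (Ksym gs ps) => h1 h2.
have {}h2 : c < 2^-1 * a + (1 - 2^-1) * b by apply: h2; lra.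
move: H1 H2 Hneg h1 h2.
set x := K ps ps; set y := K ps gs; set z := K gs gs.
clear. move=> H1 H2 Hneg h1 h2.
lra.
Qed.
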